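(* Let $m\ge1$ be an integer, $\Gamma_1,\Gamma_2$ co-prime integers with $1<\Gamma_1<\Gamma_2$, $m_1=m\Gamma_1$, $m_2=m\Gamma_2$, let $1\le j\le K+1$ and put $X=\min\big(m_2(1+\ddot n_{2,j}),\,m_1(1+\ddot n_{1,j})\big)$. (a) For every integer $N$ with $0\le N<X$ and every pair of erroneous remainders $\tilde r_1,\tilde r_2$ of $N$ whose errors satisfy $$-\frac{\sigma_j}{2}\le\frac{\Delta r_1-\Delta r_2}{m}<\frac{\sigma_j}{2},$$ Algorithm 2 (with index $j$) returns $\hat n_1=n_1$ and $\hat n_2=n_2$. (b) (Sharpness) For $N=X$ there exist erroneous remainders $\tilde r_1,\tilde r_2$ of $N$ whose errors satisfy the same condition, for which Algorithm 2 returns $(\hat n_1,\hat n_2)\ne(n_1,n_2)$.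
   Context: $|a|_b$ is the remainder of the integer $a$ modulo the positive integer $b$; $[x]=\lfloor x+1/2\rfloor$. For an integer $N\ge0$: folding integers $n_i=\lfloor N/m_i\rfloor$, remainders $r_i=N-n_im_i$; erroneous remainders are integers $\tilde r_i$ with $0\le\tilde r_i<m_i$, errors $\Delta r_i=\tilde r_i-r_i$. Euclidean sequence: $\sigma_{-1}=\Gamma_2$, $\sigma_0=\Gamma_1$, $\sigma_i=|\sigma_{i-2}|_{\sigma_{i-1}}$ for $i\ge1$; $K\ge0$ is the index with $\sigma_K>1$, $\sigma_{K+1}=1$. For $1\le n<\Gamma_1$, $S_{2,n}=\{|t\Gamma_2|_{\Gamma_1}:0\le t\le n\}$, $d_{2,n}$ = minimum distance between distinct elements of $S_{2,n}$; for $1\le n<\Gamma_2$, $S_{1,n}=\{|t\Gamma_1|_{\Gamma_2}:0\le t\le n\}$, $d_{1,n}$ likewise. $\ddot n_{2,j}=\max\{n:1\le n<\Gamma_1,\ d_{2,n}\ge\sigma_j\}$, $\ddot n_{1,j}=\max\{n:1\le n<\Gamma_2,\ d_{1,n}\ge\sigma_j\}$. $\bar\Gamma_{21}$ is the inverse of $\Gamma_2$ modulo $\Gamma_1$, $\bar\Gamma_{12}$ the inverse of $\Gamma_1$ modulo $\Gamma_2$. Algorithm 2 (index $j$, input $\tilde r_1,\tilde r_2$): compute $\mathbf q_{21}=(\tilde r_1-\tilde r_2)/m$. (i) If $\mathbf q_{21}\ge\sigma_j/2$: if some $x\in S_{2,\ddot n_{2,j}}$ satisfies $-\sigma_j/2\le\mathbf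 q_{21}-x<\sigma_j/2$, let $s_2=x$; otherwise let $s_2$ be an element of $S_{2,\ddot n_{2,j}}$ at minimum distance from $\mathbf q_{21}$. Let $\hat n_2\in[0,\Gamma_1)$ with $\hat n_2\equiv s_2\bar\Gamma_{21}\pmod{\Gamma_1}$ and $\hat n_1=[(\hat n_2m_2+\tilde r_2-\tilde r_1)/m_1]$. (ii) If $\mathbf q_{21}<-\sigma_j/2$: if some $y\in S_{1,\ddot n_{1,j}}$ satisfies $-\sigma_j/2\le\mathbf q_{21}+y<\sigma_j/2$, let $s_1=y$; otherwise let $s_1$ be an element of $S_{1,\ddot n_{1,j}}$ at minimum distance from $-\mathbf q_{21}$. Let $\hat n_1\in[0,\Gamma_2)$ with $\hat n_1\equiv s_1\bar\Gamma_{12}\pmod{\Gamma_2}$ and $\hat n_2=[(\hat n_1m_1+\tilde r_1-\tilde r_2)/m_2]$. (iii) If $-\sigma_j/2\le\mathbf q_{21}<\sigma_j/2$: $\hat n_1=\hat n_2=0$. *)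

(* Defs.v *)
From HB Require Import structures.
From mathcomp Require Import all_boot all_order all_algebra.
Set Implicit Arguments. Unset Strict Implicit. Unset Printing Implicit Defensive.
Import Order.TTheory GRing.Theory Num.Theory.

(* Euclidean sequence, shifted by 2 in the index:
   esig G1 G2 0 = sigma_{-1} = G2, esig G1 G2 1 = sigma_0 = G1,
   esig G1 G2 (i+2) = esig i mod esig (i+1).  Hence sigma_i = esig (i+1). *)
Fixpoint esig_pair (G1 G2 : nat) (k : nat) : nat * nat :=
  match k with
  | 0 => (G2, G1)
  | k'.+1 => let p := esig_pair G1 G2 k' in (p.2, p.1 %% p.2)
  end.
Definition esig (G1 G2 : nat) (k : nat) : nat := (esig_pair G1 G2 k).1.
Definition sigma (G1 G2 : nat) (i : nat) : nat := esig G1 G2 i.+1.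

Definition Sset (a b n : nat) : seq nat := [seq (t * a) %% b | t <- iota 0 n.+1].

Definition distn (x y : nat) : nat := (x - y) + (y - x).

(* minimum distance between distinct elements of S_{a,b,n}; all elements
   are < b, so b is a neutral upper bound for the minimum. *)
Definition dmin (a b n : nat) : nat :=
  \big[minn/b]_(x <- Sset a b n) \big[minn/b]_(y <- Sset a b n | x != y) distn x y.

Definition nddot (a b s : nat) : nat := \max_(1 <= n < b | s <= dmin a b n) n.

Definition round (x : rat) : int := Num.floor (x + 1 / 2)%R.

Local Open Scope ring_scope.

(* Algorithm 2 with index j (sigma_j = sigma G1 G2 j), as a relation between
   the inputs r1t, r2t and the possible outputs (n1h, n2h). *)
Definition alg2 (m G1 G2 j r1t r2t : nat) (n1h n2h : int) : Prop :=
  let m1 := (m * G1)%N in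
  let m2 := (m * G2)%N in
  let s : rat := (sigma G1 G2 j)%:R in
  let q : rat := ((r1t%:R - r2t%:R) / m%:R) in
  if s / 2 <= q then
    let S := Sset G2 G1 (nddot G2 G1 (sigma G1 G2 j)) in
    exists s2 : nat, s2 \in S /\
      (if has (fun x : nat => (- (s / 2) <= q - x%:R) && (q - x%:R < s / 2)) S
       then - (s / 2) <= q - s2%:R /\ q - s2%:R < s / 2
       else forall y, y \in S -> `|q - s2%:R| <= `|q - y%:R|) /\
      exists inv : nat, (G2 * inv = 1 %[mod G1])%N /\
        n2h = ((s2 * inv) %% G1)%N%:Z /\
        n1h = round ((n2h%:~R * m2%:R + r2t%:R - r1t%:R) / m1%:R)
  else if q < - (s / 2) then
    let S := Sset G1 G2 (nddot G1 G2 (sigma G1 G2 j)) in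
    exists s1 : nat, s1 \in S /\
      (if has (fun y : nat => (- (s / 2) <= q + y%:R) && (q + y%:R < s / 2)) S
       then - (s / 2) <= q + s1%:R /\ q + s1%:R < s / 2
       else forall y, y \in S -> `|- q - s1%:R| <= `|- q - y%:R|) /\
      exists inv : nat, (G1 * inv = 1 %[mod G2])%N /\
        n1h = ((s1 * inv) %% G2)%N%:Z /\
        n2h = round ((n1h%:~R * m1%:R + r1t%:R - r2t%:R) / m2%:R)
  else n1h = 0 /\ n2h = 0.

Definition err_ok (m G1 G2 j N r1t r2t : nat) : Prop :=
  let s : rat := (sigma G1 G2 j)%:R in
  let d1 : int := r1t%:Z - (N %% (m * G1))%N%:Z in
  let d2 : int := r2t%:Z - (N %% (m * G2))%N%:Z in
  let e : rat := (d1 - d2)%:~R / m%:R in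
  - (s / 2) <= e /\ e < s / 2.

(* Main.v *)
Require Import Defs.
From HB Require Import structures.
From mathcomp Require Import all_boot all_order all_algebra.
From mathcomp Require Import ring lra zify.
Import Order.TTheory GRing.Theory Num.Theory.

Section Helpers1.

Lemma esigSS G1 G2 k : esig G1 G2 k.+2 = esig G1 G2 k %% esig G1 G2 k.+1.
Proof. by rewrite /esig /=. Qed.
Lemma esig0 G1 G2 : esig G1 G2 0 = G2. Proof. by []. Qed.
Lemma esig1 G1 G2 : esig G1 G2 1 = G1. Proof. by []. Qed.

Lemma esig_zero G1 G2 k i : esig G1 G2 k = 0 -> esig G1 G2 (k + i.*2) = 0.
Proof.
move=> h; elim: i => [|i IH]; first by rewrite addn0.
by rewrite doubleS !addnS esigSS IH mod0n.
Qed.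

Lemma esig_pos G1 G2 K k : (1 < sigma G1 G2 K)%N -> sigma G1 G2 K.+1 = 1 ->
  (k <= K.+2)%N -> (0 < esig G1 G2 k)%N.
Proof.
rewrite /sigma => hK1 hK2 hk; rewrite lt0n; apply/negP => /eqP h0.
case: (boolP (odd (K.+1 - k))) => hodd.
- have e : K.+2 = k + ((K.+2 - k)./2).*2.
    have : ~~ odd (K.+2 - k) by rewrite subSn ?oddS ?hodd //; lia.
    move=> hev; rewrite -{1}(odd_double_half (K.+2 - k)) (negbTE hev) add0n; lia.
  by move: (esig_zero _ _ _ (K.+2 - k)./2 h0); rewrite -e hK2.
- have [hk2|hk2] : k = K.+2 \/ k <= K.+1 by lia.
    by move: h0; rewrite hk2 hK2.
  have e : K.+1 = k + ((K.+1 - k)./2).*2.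
    rewrite -{1}(odd_double_half (K.+1 - k)) (negbTE hodd) add0n; lia.
  by move: (esig_zero _ _ _ (K.+1 - k)./2 h0); rewrite -e => h; rewrite h in hK1.
Qed.

Lemma sigma_bounds G1 G2 K j : (1 < sigma G1 G2 K)%N -> sigma G1 G2 K.+1 = 1 ->
  (1 <= j <= K.+1)%N -> (0 < G1)%N -> (0 < sigma G1 G2 j < G1)%N.
Proof.
move=> hK1 hK2 hj hG.
have dec : forall k, (1 <= k <= K.+1)%N -> (esig G1 G2 k.+1 < esig G1 G2 k)%N.
  case=> [|k] hk; first by lia.
  rewrite esigSS ltn_mod; apply: (esig_pos _ _ _ _ hK1 hK2); lia.
have le : forall k, (1 <= k <= K.+2)%N -> (esig G1 G2 k <= G1)%N.
  elim=> [|k IH] hk; first by lia.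
  case: k IH hk => [|k] IH hk; first by rewrite esig1.
  have := dec k.+1; have := IH; lia.
rewrite /sigma (esig_pos _ _ _ _ hK1 hK2) /=; last by lia.
have := dec j; have := le j; lia.
Qed.

Lemma bigmax_seqP (r : seq nat) (P : pred nat) :
  let M := \big[maxn/0%N]_(i <- r | P i) i in
  (M = 0%N \/ (M \in r /\ P M)) /\ (forall i, i \in r -> P i -> (i <= M)%N).
Proof.
elim: r => [|x r [IH1 IH2]] /=; first by rewrite big_nil; split; [left|].
rewrite big_cons; case: (boolP (P x)) => hx.
- split.
  + case: (leqP x (\big[maxn/0%N]_(i <- r | P i) i)) => h.
    * case: IH1 => [->|[h1 h2]]; [by left|right].
      by rewrite inE h1 orbT.
    * by right; rewrite inE eqxx.
  + move=> i; rewrite inE => /orP [/eqP ->|hi] hPi; first by rewrite leq_maxl.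
    by rewrite leq_max (IH2 _ hi hPi) orbT.
- split.
  + case: IH1 => [->|[h1 h2]]; [by left|right]; by rewrite inE h1 orbT.
  + move=> i; rewrite inE => /orP [/eqP ->|hi] hPi; first by rewrite hPi in hx.
    exact: IH2.
Qed.

Lemma bigmin_ge (T : eqType) (r : seq T) (P : pred T) (F : T -> nat) b c :
  (c <= \big[minn/b]_(x <- r | P x) F x)%N =
  (c <= b)%N && all (fun x => P x ==> (c <= F x)%N) r.
Proof.
elim: r => [|x r IH] /=; first by rewrite big_nil andbT.
rewrite big_cons; case: (P x) => /=; last by [].
by rewrite leq_min IH andbCA.
Qed.

Lemma memS a b n x : (x \in Sset a b n) <-> exists2 t, (t <= n)%N & x = (t * a) %% b.
Proof.
split.
- by case/mapP=> t; rewrite mem_iota add0n ltnS => ht ->; exists t.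
- by case=> t ht ->; apply/mapP; exists t => //; rewrite mem_iota add0n ltnS.
Qed.

Lemma dmin_sep a b n s : (s <= dmin a b n)%N -> forall x y,
  x \in Sset a b n -> y \in Sset a b n -> x != y -> (s <= distn x y)%N.
Proof.
rewrite /dmin bigmin_ge => /andP [_ /allP H] x y hx hy hxy.
move: (H x hx); rewrite /= bigmin_ge => /andP [_ /allP H2].
by move: (H2 y hy); rewrite hxy.
Qed.

Lemma dmin_fail a b n s : (s <= b)%N -> ~~ (s <= dmin a b n)%N -> exists x y,
  [/\ x \in Sset a b n, y \in Sset a b n, x != y & (distn x y < s)%N].
Proof.
move=> hsb; rewrite /dmin bigmin_ge hsb andTb => /allPn [x hx].
rewrite implyTb bigmin_ge hsb andTb => /allPn [y hy].
rewrite negb_imply -ltnNge => /andP [hxy hd].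
by exists x, y.
Qed.

Lemma nddot_spec a b s :
  (nddot a b s = 0%N \/ ((s <= dmin a b (nddot a b s))%N /\ (1 <= nddot a b s < b)%N)) /\
  (forall n, (1 <= n < b)%N -> (s <= dmin a b n)%N -> (n <= nddot a b s)%N).
Proof.
have [H1 H2] := bigmax_seqP (index_iota 1 b) (fun n => s <= dmin a b n)%N.
rewrite /nddot; split.
- case: H1 => [->|[h1 h2]]; [by left|right]; split => //.
  by move: h1; rewrite mem_index_iota.
- by move=> n hn hP; apply: H2 => //; rewrite mem_index_iota.
Qed.

Lemma nddot_lt a b s : (0 < b)%N -> (nddot a b s < b)%N.
Proof. by move=> hb; case: (nddot_spec a b s) => [[->|[_ /andP[]]]]. Qed.

Lemma nddot_sep a b s x y : x \in Sset a b (nddot a b s) -> y \in Sset a b (nddot a b s) ->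
  x != y -> (s <= distn x y)%N.
Proof.
case: (nddot_spec a b s) => [[h0|[hd _]] _].
- rewrite h0 => /memS [t ht ->] /memS [t' ht' ->].
  by move: ht ht'; rewrite !leqn0 => /eqP -> /eqP ->; rewrite eqxx.
- exact: dmin_sep.
Qed.

Lemma inv_mod a b inv t : (a * inv = 1 %[mod b])%N -> (((t * a %% b) * inv) %% b = t %% b)%N.
Proof. by move=> h; rewrite modnMml -mulnA -modnMmr h modnMmr muln1. Qed.

Local Open Scope ring_scope.

Lemma Dr_exists (m G1 G2 n1 n2 r1 r2 s n1d n2d : nat) :
  (0 < m)%N -> coprime G1 G2 -> (1 < G1)%N -> (G1 < G2)%N ->
  (n1 <= n1d)%N -> (n2 <= n2d)%N -> (n2 < G1)%N ->
  (n1 * (m * G1) + r1 = n2 * (m * G2) + r2)%N -> (r1 < m * G1)%N -> (r2 < m * G2)%N ->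
  (forall x y, x \in Sset G2 G1 n2d -> y \in Sset G2 G1 n2d -> x != y -> (s <= distn x y)%N) ->
  (forall x y, x \in Sset G1 G2 n1d -> y \in Sset G1 G2 n1d -> x != y -> (s <= distn x y)%N) ->
  exists Dr : rat,
  [/\ r1%:R = m%:R * Dr + r2%:R :> rat,
      Dr = 0 -> n1 = 0%N /\ n2 = 0%N,
      0 < Dr -> exists Dn : nat, [/\ Dr = Dn%:R, Dn = (n2 * G2 %% G1)%N, Dn \in Sset G2 G1 n2d & (s <= Dn)%N]
    & Dr < 0 -> exists Dn : nat, [/\ Dr = - Dn%:R, Dn = (n1 * G1 %% G2)%N, Dn \in Sset G1 G2 n1d & (s <= Dn)%N]].
Proof.
move=> hm hcop hG1 h12 hn1 hn2 hn2G hN hr1 hr2 sep2 sep1.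
have z2 : 0%N \in Sset G2 G1 n2d by apply/memS; exists 0%N; rewrite ?mul0n ?mod0n.
have z1 : 0%N \in Sset G1 G2 n1d by apply/memS; exists 0%N; rewrite ?mul0n ?mod0n.
case: (leqP (n1 * G1) (n2 * G2)) => hc.
- set Dn := (n2 * G2 - n1 * G1)%N.
  have e1 : (n2 * G2 = n1 * G1 + Dn)%N by rewrite /Dn; lia.
  have e2 := congr1 (muln m) e1.
  have e3 : (r1 = m * Dn + r2)%N by lia.
  have hDn : (Dn < G1)%N by rewrite -(ltn_pmul2l hm); lia.
  have hDm : Dn = (n2 * G2 %% G1)%N by rewrite e1 modnMDl modn_small.
  have hDS : Dn \in Sset G2 G1 n2d by apply/memS; exists n2.
  exists Dn%:R; split.
  + by rewrite e3 natrD natrM.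
  + move/eqP; rewrite pnatr_eq0 => /eqP h0.
    have e4 : (n2 * G2 = n1 * G1)%N by rewrite e1 h0 addn0.
    have : (G1 %| n2 * G2)%N by rewrite e4 dvdn_mull.
    rewrite Gauss_dvdl // => hd.
    have n20 : n2 = 0%N.
      case: (posnP n2) => // hpos.
      by have := dvdn_leq hpos hd; lia.
    split => //; move: e4; rewrite n20 mul0n => /esym /eqP; rewrite muln_eq0.
    by case/orP => /eqP //; lia.
  + move=> hpos; exists Dn; split => //.
    have : Dn != 0%N by rewrite -lt0n -(ltr0n rat).
    move/(sep2 _ _ hDS z2); rewrite /distn; lia.
  + by rewrite ltNge ler0n.
- set Dn := (n1 * G1 - n2 * G2)%N.
  have e1 : (n1 * G1 = n2 * G2 + Dn)%N by rewrite /Dn; lia.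
  have e2 := congr1 (muln m) e1.
  have e3 : (r2 = m * Dn + r1)%N by lia.
  have hDn : (Dn < G2)%N by rewrite -(ltn_pmul2l hm); lia.
  have hDm : Dn = (n1 * G1 %% G2)%N by rewrite e1 modnMDl modn_small.
  have hDS : Dn \in Sset G1 G2 n1d by apply/memS; exists n1.
  have hD0 : (0 < Dn)%N by rewrite /Dn; lia.
  exists (- Dn%:R); split.
  + rewrite e3 natrD natrM; ring.
  + by move/eqP; rewrite oppr_eq0 pnatr_eq0 => /eqP; lia.
  + by rewrite oppr_gt0 ltNge ler0n.
  + move=> _; exists Dn; split => //.
    have : Dn != 0%N by rewrite -lt0n.
    move/(sep1 _ _ hDS z1); rewrite /distn; lia.
Qed.

Lemma round_pm (n G s : nat) (e : rat) (b : bool) : (s < G)%N ->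
  - (s%:R / 2) <= e -> e < s%:R / 2 ->
  round (n%:R + (if b then e else - e) / G%:R) = n%:Z.
Proof.
move=> hsG he1 he2; rewrite /round; apply: floor_def.
have hG : (0 : rat) < G%:R by rewrite ltr0n; lia.
have hsG' : (s.+1%:R : rat) <= G%:R by rewrite ler_nat.
rewrite -natr1 in hsG'.
set f := (if b then e else - e) / G%:R.
have hf : f * G%:R = (if b then e else - e) by rewrite /f mulfVK // gt_eqF.
have hb : - (s%:R / 2) <= (if b then e else - e) <= s%:R / 2.
  by case: b {f hf}; apply/andP; split; lra.
case/andP: hb => hb1 hb2.
rewrite -[n%:~R]/(n%:R) intrD -[n%:~R]/(n%:R) /=.
apply/andP; split; nra.
Qed.

Lemma distn_contra (x y s : nat) : (s <= distn x y)%N -> (x < y + s)%N -> (y < x + s)%N -> False.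
Proof. rewrite /distn; lia. Qed.

Lemma intr_natE (n : nat) : ((n%:Z)%:~R : rat) = n%:R.
Proof. by []. Qed.

Lemma partA m G1 G2 j (hm : (1 <= m)%N) (hcop : coprime G1 G2) (h1 : (1 < G1)%N)
  (h12 : (G1 < G2)%N) (hs : (0 < sigma G1 G2 j < G1)%N) N r1t r2t :
  (N < minn (m * G2 * (1 + nddot G2 G1 (sigma G1 G2 j)))
            (m * G1 * (1 + nddot G1 G2 (sigma G1 G2 j))))%N ->
  (r1t < m * G1)%N -> (r2t < m * G2)%N -> err_ok m G1 G2 j N r1t r2t ->
  forall n1h n2h : int, alg2 m G1 G2 j r1t r2t n1h n2h ->
    n1h = Posz (N %/ (m * G1)) /\ n2h = Posz (N %/ (m * G2)).
Proof.
move=> hN hr1t hr2t herr n1h n2h; rewrite /alg2 /err_ok in herr *; cbv zeta in herr |- *.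
set s := sigma G1 G2 j in hs herr hN *.
set n2d := nddot G2 G1 s in hN *.
set n1d := nddot G1 G2 s in hN *.
have sep2 := @nddot_sep G2 G1 s. have sep1 := @nddot_sep G1 G2 s.
rewrite -/n2d in sep2. rewrite -/n1d in sep1.
have hm0 : (m != 0)%N by rewrite -lt0n.
have hG10 : (G1 != 0)%N by rewrite -lt0n; apply: ltn_trans h1.
have hG20 : (G2 != 0)%N by rewrite -lt0n; apply: ltn_trans h12; apply: ltn_trans h1.
have hsG : (s < G1)%N by case/andP: hs.
have hsG2 : (s < G2)%N by apply: ltn_trans h12.
have hn2dG : (n2d < G1)%N by apply: nddot_lt; lia.
have hn1dG : (n1d < G2)%N by apply: nddot_lt; lia.
have hm1 : (0 < m * G1)%N by rewrite muln_gt0; lia.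
have hm2 : (0 < m * G2)%N by rewrite muln_gt0; lia.
move: hN; rewrite leq_min => /andP [hNa hNb].
have hN1 := divn_eq N (m * G1). have hN2 := divn_eq N (m * G2).
have hr1 := ltn_pmod N hm1. have hr2 := ltn_pmod N hm2.
set n1 := (N %/ (m * G1))%N in hN1 *. set n2 := (N %/ (m * G2))%N in hN2 *.
set r1 := (N %% (m * G1))%N in hN1 hr1 herr *. set r2 := (N %% (m * G2))%N in hN2 hr2 herr *.
have hn2 : (n2 <= n2d)%N by rewrite -ltnS -addn1 addnC /n2 ltn_divLR // mulnC.
have hn1 : (n1 <= n1d)%N by rewrite -ltnS -addn1 addnC /n1 ltn_divLR // mulnC.
have := @Dr_exists m G1 G2 n1 n2 r1 r2 s n1d n2d hm hcop h1 h12 hn1 hn2 (leq_ltn_trans hn2 hn2dG).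
case=> //; first by rewrite -hN1 -hN2.
move=> Dr [hr H0 Hpos Hneg].
set e := ((r1t%:Z - r1%:Z - (r2t%:Z - r2%:Z))%:~R / m%:R : rat) in herr.
set q := ((r1t%:R - r2t%:R) / m%:R : rat).
have hq : q = Dr + e.
  rewrite /q /e !rmorphB /= !intr_natE hr. field. by rewrite pnatr_eq0.
case: herr => he1 he2.
case: ifP => hb1.
-
  have hDp : 0 < Dr by lra.
  case: (Hpos hDp) => Dn [hDr hDm hDS hsD].
  case=> s2 [hs2S [hwin [inv [hinv [hn2h hn1h]]]]].
  have hhas : has (fun x : nat => (- (s%:R / 2) <= q - x%:R) && (q - x%:R < s%:R / 2))
                  (Sset G2 G1 n2d).
    by apply/hasP; exists Dn => //; apply/andP; split; lra.
  rewrite hhas in hwin; case: hwin => hw1 hw2.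
  have hs2D : s2 = Dn.
    apply/eqP; apply: contraT => hne.
    have := sep2 _ _ hs2S hDS hne.
    have : (s2%:R : rat) < Dn%:R + s%:R by lra.
    have : (Dn%:R : rat) < s2%:R + s%:R by lra.
    rewrite -!natrD !ltr_nat; move=> ha hb hc; by case: (distn_contra _ _ _ hc hb ha).
  have en2 : n2h = n2%:Z by rewrite hn2h hs2D hDm inv_mod // modn_small //; apply: leq_ltn_trans hn2 hn2dG.
  split => //.
  rewrite hn1h en2.
  have -> : ((n2%:Z)%:~R * (m * G2)%:R + r2t%:R - r1t%:R) / (m * G1)%:R
            = n1%:R + (if false then e else - e) / G1%:R.
    rewrite /e !rmorphB /= !intr_natE.
    have hr' : (r1%:R : rat) = n2%:R * (m * G2)%:R + r2%:R - n1%:R * (m * G1)%:R.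
      have E : ((n1 * (m * G1) + r1)%N%:R : rat) = (n2 * (m * G2) + r2)%N%:R by rewrite -hN1 -hN2.
      rewrite !natrD in E; lra.
    rewrite hr' !natrM; field.
    by rewrite ?pnatr_eq0 ?hm0 ?hG10 ?hG20.
  have := round_pm n1 G1 s e false hsG he1 he2. by [].

- case: ifP => hb2.
  +
    have hDn : Dr < 0 by lra.
    case: (Hneg hDn) => Dn [hDr hDm hDS hsD].
    case=> s1 [hs1S [hwin [inv [hinv [hn1h hn2h]]]]].
    have hhas : has (fun y : nat => (- (s%:R / 2) <= q + y%:R) && (q + y%:R < s%:R / 2))
                    (Sset G1 G2 n1d).
      by apply/hasP; exists Dn => //; apply/andP; split; lra.
    rewrite hhas in hwin; case: hwin => hw1 hw2.
    have hs1D : s1 = Dn.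
      apply/eqP; apply: contraT => hne.
      have := sep1 _ _ hs1S hDS hne.
      have : (s1%:R : rat) < Dn%:R + s%:R by lra.
      have : (Dn%:R : rat) < s1%:R + s%:R by lra.
      rewrite -!natrD !ltr_nat; move=> ha hb hc; by case: (distn_contra _ _ _ hc hb ha).
    have en1 : n1h = n1%:Z by rewrite hn1h hs1D hDm inv_mod // modn_small //; apply: leq_ltn_trans hn1 hn1dG.
    split => //.
    rewrite hn2h en1.
    have -> : ((n1%:Z)%:~R * (m * G1)%:R + r1t%:R - r2t%:R) / (m * G2)%:R
              = n2%:R + (if true then e else - e) / G2%:R.
      rewrite /e !rmorphB /= !intr_natE.
      have hr' : (r2%:R : rat) = n1%:R * (m * G1)%:R + r1%:R - n2%:R * (m * G2)%:R.
        have E : ((n1 * (m * G1) + r1)%N%:R : rat) = (n2 * (m * G2) + r2)%N%:R by rewrite -hN1 -hN2.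
        rewrite !natrD in E; lra.
      rewrite hr' !natrM; field.
      by rewrite ?pnatr_eq0 ?hm0 ?hG10 ?hG20.
    have := round_pm n2 G2 s e true hsG2 he1 he2. by [].

  +
    case=> -> ->.
    have hD0 : Dr = 0.
      case: (ltrgtP Dr 0) => // hD.
      * case: (Hneg hD) => Dn [hDr _ _ hsD].
        have : (s%:R : rat) <= Dn%:R by rewrite ler_nat.
        move: hb2; rewrite hq hDr => /negbT; rewrite -leNgt => ?; lra.
      * case: (Hpos hD) => Dn [hDr _ _ hsD].
        have : (s%:R : rat) <= Dn%:R by rewrite ler_nat.
        move: hb1; rewrite hq hDr => /negbT; rewrite -ltNge => ?; lra.
    by case: (H0 hD0) => -> ->.
Qed.

End Helpers1.

Section Helpers2.

Lemma choose_q (a b s G : nat) : (0 < s)%N -> (a < G)%N -> (b < G)%N -> (distn a b < s)%N ->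
  let qn := ((2 * maxn a b + 1 - s) %/ 2)%N in
  [/\ (2 * a <= 2 * qn + s)%N, (2 * qn < 2 * a + s)%N, (2 * b <= 2 * qn + s)%N,
      (2 * qn < 2 * b + s)%N & (qn < G)%N].
Proof. rewrite /distn => *; cbv zeta; split; lia. Qed.

Lemma choose_p (a b s G : nat) : (0 < s)%N -> (a < G)%N -> (b < G)%N -> (distn a b < s)%N ->
  let p := ((2 * maxn a b + 2 - s) %/ 2)%N in
  [/\ (2 * p <= 2 * a + s)%N, (2 * a < 2 * p + s)%N, (2 * p <= 2 * b + s)%N,
      (2 * b < 2 * p + s)%N & (p < G)%N].
Proof. rewrite /distn => *; cbv zeta; split; lia. Qed.

Lemma fail_witness a b s nd : (s <= b)%N -> (nd.+1 < b)%N -> nd = nddot a b s ->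
  exists tb, [/\ (tb <= nd)%N, (nd.+1 * a %% b != tb * a %% b)%N
               & (distn (nd.+1 * a %% b) (tb * a %% b) < s)%N].
Proof.
move=> hsb hnb hnd.
have hf : ~~ (s <= dmin a b nd.+1)%N.
  apply/negP => h; have H := (nddot_spec a b s).2 nd.+1; rewrite -hnd in H.
  have hr : (1 <= nd.+1 < b)%N by rewrite hnb.
  by have := H hr h; rewrite ltnn.
have sep := @nddot_sep a b s; rewrite -hnd in sep.
case: (dmin_fail _ _ _ _ hsb hf) => x [y [/memS [t ht ->] /memS [t' ht' ->] hxy hd]].
have [ht1|ht1] : (t <= nd \/ t = nd.+1)%N by lia.
- have [ht2|ht2] : (t' <= nd \/ t' = nd.+1)%N by lia.
  + have := sep (t * a %% b) (t' * a %% b).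
    rewrite hxy; move/(_ _ _ isT) => h.
    have : (s <= distn (t * a %% b) (t' * a %% b))%N.
      by apply: h; apply/memS; [exists t | exists t'].
    lia.
  + exists t; split => //; first by rewrite -ht2 eq_sym.
    by move: hd; rewrite ht2 /distn; lia.
- have [ht2|ht2] : (t' <= nd \/ t' = nd.+1)%N by lia.
  + by exists t'; rewrite -ht1.
  + by move: hxy; rewrite ht1 ht2 eqxx.
Qed.

Local Open Scope ring_scope.

Lemma zero_choice m G1 G2 j X : (0 < m)%N -> (0 < sigma G1 G2 j)%N ->
  (0 < m * G1)%N -> (0 < m * G2)%N ->
  (X %% (m * G1) = 0)%N -> (X %% (m * G2) = 0)%N -> (X %/ (m * G1) != 0)%N ->
  exists r1t r2t : nat, (r1t < m * G1)%N /\ (r2t < m * G2)%N /\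
     err_ok m G1 G2 j X r1t r2t /\
     forall n1h n2h : int, alg2 m G1 G2 j r1t r2t n1h n2h ->
       (n1h, n2h) <> (Posz (X %/ (m * G1)), Posz (X %/ (m * G2))).
Proof.
move=> hm hs hm1 hm2 hX1 hX2 hXd; exists 0%N, 0%N; split => //; split => //.
have hs' : (0 : rat) < (sigma G1 G2 j)%:R by rewrite ltr0n.
split.
- rewrite /err_ok; cbv zeta; rewrite hX1 hX2 !subrr mul0r; split; lra.
- move=> n1h n2h; rewrite /alg2; cbv zeta.
  rewrite subrr mul0r.
  have -> : ((sigma G1 G2 j)%:R / 2 <= (0 : rat)) = false by apply/negbTE; rewrite -ltNge; lra.
  have -> : ((0 : rat) < - ((sigma G1 G2 j)%:R / 2)) = false by apply/negbTE; rewrite -leNgt; lra.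
  case=> -> -> [] /esym /eqP; by rewrite (negbTE hXd).
Qed.

Lemma win_nat (x y s : nat) : (2 * x <= 2 * y + s)%N -> (2 * y < 2 * x + s)%N ->
  - (s%:R / 2) <= (y%:R - x%:R : rat) /\ (y%:R - x%:R : rat) < s%:R / 2.
Proof.
move=> h1 h2.
have h1' : (2 * x%:R : rat) <= 2 * y%:R + s%:R by rewrite -!natrM -natrD ler_nat.
have h2' : (2 * y%:R : rat) < 2 * x%:R + s%:R by rewrite -!natrM -natrD ltr_nat.
split; lra.
Qed.

Lemma near_eq (x y s : nat) (u v : rat) :
  - (s%:R / 2) <= u - x%:R -> u - x%:R < s%:R / 2 ->
  - (s%:R / 2) <= v - y%:R -> v - y%:R < s%:R / 2 -> u = v ->
  (distn x y < s)%N.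
Proof.
move=> h1 h2 h3 h4 huv.
have : (x%:R : rat) < y%:R + s%:R by lra.
have : (y%:R : rat) < x%:R + s%:R by lra.
rewrite -!natrD !ltr_nat /distn; lia.
Qed.

Lemma neg_contra (x y : rat) : 0 < y -> 0 <= x -> x < - (y / 2) -> False.
Proof. move=> *; lra. Qed.

Lemma case1 m G1 G2 j (hm : (0 < m)%N) (h1 : (1 < G1)%N) (h12 : (G1 < G2)%N)
  (hs : (0 < sigma G1 G2 j < G1)%N) :
  let s := sigma G1 G2 j in let n2d := nddot G2 G1 s in (n2d.+1 < G1)%N ->
  let X := (m * G2 * (1 + n2d))%N in
  exists r1t r2t : nat, (r1t < m * G1)%N /\ (r2t < m * G2)%N /\
     err_ok m G1 G2 j X r1t r2t /\
     forall n1h n2h : int, alg2 m G1 G2 j r1t r2t n1h n2h ->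
       (n1h, n2h) <> (Posz (X %/ (m * G1)), Posz (X %/ (m * G2))).
Proof.
move=> s n2d hlt X.
have sep2 := @nddot_sep G2 G1 s; rewrite -/n2d in sep2.
have hsG : (s < G1)%N by case/andP: hs.
have hs0 : (0 < s)%N by case/andP: hs.
have hG1p : (0 < G1)%N by apply: ltnW.
have hG2p : (0 < G2)%N by apply: ltn_trans h12; apply: ltnW.
have hm0 : (m%:R : rat) != 0 by rewrite pnatr_eq0 -lt0n.
case: (fail_witness G2 G1 s n2d (ltnW hsG) hlt erefl) => tb [htb hne hd].
set n2 := n2d.+1 in hlt hne hd.
set a := (n2 * G2 %% G1)%N in hne hd. set b := (tb * G2 %% G1)%N in hne hd.
have ha : (a < G1)%N by apply: ltn_pmod.
have hb : (b < G1)%N by apply: ltn_pmod.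
have hbS : b \in Sset G2 G1 n2d by apply/memS; exists tb.
case: (choose_q a b s G1 hs0 ha hb hd) => /=.
set qn := ((2 * maxn a b + 1 - s) %/ 2)%N => c1 c2 c3 c4 c5.
have hXe : X = (m * (G2 * n2))%N by rewrite /X add1n mulnA.
have hX1 : (X %% (m * G1) = m * a)%N by rewrite hXe -muln_modr /a [(G2 * n2)%N]mulnC.
have hX2 : (X %% (m * G2) = 0)%N by rewrite hXe mulnA modnMr.
have hXd2 : (X %/ (m * G2) = n2)%N by rewrite hXe mulnA mulKn // muln_gt0 hm.
exists (m * qn)%N, 0%N; split; first by rewrite ltn_pmul2l.
split; first by rewrite muln_gt0 hm.
split.
- rewrite /err_ok; cbv zeta; rewrite hX1 hX2 !rmorphB /= !intr_natE !natrM subrr subr0.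
  have -> : ((m%:R * qn%:R - m%:R * a%:R) / m%:R : rat) = qn%:R - a%:R by field.
  exact: win_nat.
- move=> n1h n2h; rewrite /alg2; cbv zeta; rewrite -/s -/n2d.
  have -> : (((m * qn)%N%:R - 0%N%:R) / m%:R : rat) = qn%:R by rewrite natrM subr0; field.
  have hs' : (0 : rat) < s%:R by rewrite ltr0n.
  have hq0 : (0 : rat) <= qn%:R by rewrite ler0n.
  rewrite hXd2.
  case: ifP => hb1.
  + case=> s2 [hs2S [hwin [inv [hinv [hn2h hn1h]]]]].
    have [w1 w2] := win_nat _ _ _ c3 c4.
    have hhas : has (fun x : nat => (- (s%:R / 2 : rat) <= qn%:R - x%:R) && (qn%:R - x%:R < (s%:R / 2 : rat)))
                    (Sset G2 G1 n2d).
      by apply/hasP; exists b => //; apply/andP; split.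
    rewrite hhas in hwin; case: hwin => hw1 hw2.
    have hs2b : s2 = b.
      apply/eqP; apply: contraT => hne'.
      have sv := sep2 _ _ hs2S hbS hne'.
      have := near_eq _ _ _ _ _ hw1 hw2 w1 w2 erefl; by rewrite ltnNge sv.
    have : n2h = tb%:Z.
      by rewrite hn2h hs2b inv_mod // modn_small //; apply: leq_ltn_trans htb (ltnW hlt).
    move=> -> [] _ htn; move: htb; by rewrite htn /n2 ltnn.
  + case: ifP => hb2; first by case: (neg_contra _ _ hs' hq0 hb2).
    by case=> _ -> [] _.
Qed.

Lemma pos_contra (x y : rat) : 0 < y -> 0 <= x -> y / 2 <= - x -> False.
Proof. move=> *; lra. Qed.

Lemma near_eq' (x y s : nat) (u : rat) :
  - (s%:R / 2) <= u + x%:R -> u + x%:R < s%:R / 2 ->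
  - (s%:R / 2) <= u + y%:R -> u + y%:R < s%:R / 2 ->
  (distn x y < s)%N.
Proof.
move=> h1 h2 h3 h4.
have : (x%:R : rat) < y%:R + s%:R by lra.
have : (y%:R : rat) < x%:R + s%:R by lra.
rewrite -!natrD !ltr_nat /distn; lia.
Qed.

Lemma case2 m G1 G2 j (hm : (0 < m)%N) (h1 : (1 < G1)%N) (h12 : (G1 < G2)%N)
  (hs : (0 < sigma G1 G2 j < G1)%N) :
  let s := sigma G1 G2 j in let n1d := nddot G1 G2 s in (n1d.+1 < G2)%N ->
  let X := (m * G1 * (1 + n1d))%N in
  exists r1t r2t : nat, (r1t < m * G1)%N /\ (r2t < m * G2)%N /\
     err_ok m G1 G2 j X r1t r2t /\
     forall n1h n2h : int, alg2 m G1 G2 j r1t r2t n1h n2h ->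
       (n1h, n2h) <> (Posz (X %/ (m * G1)), Posz (X %/ (m * G2))).
Proof.
move=> s n1d hlt X.
have sep1 := @nddot_sep G1 G2 s; rewrite -/n1d in sep1.
have hsG : (s < G1)%N by case/andP: hs.
have hs0 : (0 < s)%N by case/andP: hs.
have hG1p : (0 < G1)%N by apply: ltnW.
have hG2p : (0 < G2)%N by apply: ltn_trans h12; apply: ltnW.
have hsG2 : (s <= G2)%N by apply: ltnW; apply: ltn_trans h12.
have hm0 : (m%:R : rat) != 0 by rewrite pnatr_eq0 -lt0n.
case: (fail_witness G1 G2 s n1d hsG2 hlt erefl) => tb [htb hne hd].
set n1 := n1d.+1 in hlt hne hd.
set a := (n1 * G1 %% G2)%N in hne hd. set b := (tb * G1 %% G2)%N in hne hd.
have ha : (a < G2)%N by apply: ltn_pmod.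
have hb : (b < G2)%N by apply: ltn_pmod.
have hbS : b \in Sset G1 G2 n1d by apply/memS; exists tb.
case: (choose_p a b s G2 hs0 ha hb hd) => /=.
set p := ((2 * maxn a b + 2 - s) %/ 2)%N => c1 c2 c3 c4 c5.
have hXe : X = (m * (G1 * n1))%N by rewrite /X add1n mulnA.
have hX2 : (X %% (m * G2) = m * a)%N by rewrite hXe -muln_modr /a [(G1 * n1)%N]mulnC.
have hX1 : (X %% (m * G1) = 0)%N by rewrite hXe mulnA modnMr.
have hXd1 : (X %/ (m * G1) = n1)%N by rewrite hXe mulnA mulKn // muln_gt0 hm.
exists 0%N, (m * p)%N; split; first by rewrite muln_gt0 hm.
split; first by rewrite ltn_pmul2l.
split.
- rewrite /err_ok; cbv zeta; rewrite hX1 hX2 !rmorphB /= !intr_natE !natrM.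
  rewrite subrr sub0r.
  have -> : (- (m%:R * p%:R - m%:R * a%:R)) / m%:R = a%:R - p%:R :> rat by field.
  exact: win_nat.
- move=> n1h n2h; rewrite /alg2; cbv zeta; rewrite -/s -/n1d.
  have -> : ((0%N%:R - (m * p)%N%:R) / m%:R : rat) = - p%:R by rewrite natrM sub0r; field.
  have hs' : (0 : rat) < s%:R by rewrite ltr0n.
  have hp0 : (0 : rat) <= p%:R by rewrite ler0n.
  rewrite hXd1.
  case: ifP => hb1; first by case: (pos_contra _ _ hs' hp0 hb1).
  case: ifP => hb2.
  + case=> s1 [hs1S [hwin [inv [hinv [hn1h hn2h]]]]].
    have [w1 w2] := win_nat _ _ _ c3 c4.
    rewrite [b%:R - _]addrC in w1 w2.
    have hhas : has (fun y : nat => (- (s%:R / 2 : rat) <= - p%:R + y%:R) &&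
                                    (- p%:R + y%:R < (s%:R / 2 : rat)))
                    (Sset G1 G2 n1d).
      by apply/hasP; exists b => //; apply/andP; split.
    rewrite hhas in hwin; case: hwin => hw1 hw2.
    have hs1b : s1 = b.
      apply/eqP; apply: contraT => hne'.
      have sv := sep1 _ _ hs1S hbS hne'.
      have := near_eq' _ _ _ _ hw1 hw2 w1 w2; by rewrite ltnNge sv.
    have : n1h = tb%:Z.
      by rewrite hn1h hs1b inv_mod // modn_small //; apply: leq_ltn_trans htb (ltnW hlt).
    move=> -> [] htn _; move: htb; by rewrite htn /n1 ltnn.
  + by case=> -> _ [].
Qed.

End Helpers2.

Theorem theorem2 (m G1 G2 K j : nat)
  (hm : (1 <= m)%N) (hcop : coprime G1 G2) (h1 : (1 < G1)%N) (h12 : (G1 < G2)%N)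
  (hK1 : (1 < sigma G1 G2 K)%N) (hK2 : sigma G1 G2 K.+1 = 1%N)
  (hj : (1 <= j <= K.+1)%N) :
  let m1 := (m * G1)%N in
  let m2 := (m * G2)%N in
  let X := minn (m2 * (1 + nddot G2 G1 (sigma G1 G2 j)))
                (m1 * (1 + nddot G1 G2 (sigma G1 G2 j))) in
  (* (a) *)
  (forall N r1t r2t : nat, (N < X)%N -> (r1t < m1)%N -> (r2t < m2)%N ->
     err_ok m G1 G2 j N r1t r2t ->
     forall n1h n2h : int, alg2 m G1 G2 j r1t r2t n1h n2h ->
       n1h = Posz (N %/ m1) /\ n2h = Posz (N %/ m2))
  /\
  (* (b) sharpness *)
  (exists r1t r2t : nat, (r1t < m1)%N /\ (r2t < m2)%N /\
     err_ok m G1 G2 j X r1t r2t /\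
     forall n1h n2h : int, alg2 m G1 G2 j r1t r2t n1h n2h ->
       (n1h, n2h) <> (Posz (X %/ m1), Posz (X %/ m2))).
Proof.
move=> m1 m2 X.
have hs := sigma_bounds G1 G2 K j hK1 hK2 hj (ltnW h1).
split.
- move=> N r1t r2t hN hr1 hr2 herr n1h n2h halg.
  exact: (partA m G1 G2 j hm hcop h1 h12 hs N r1t r2t hN hr1 hr2 herr n1h n2h halg).
- have hG1p : (0 < G1)%N by apply: ltnW.
  have hG2p : (0 < G2)%N by apply: ltn_trans h12; apply: ltnW.
  have hm1 : (0 < m1)%N by rewrite muln_gt0 hm.
  have hm2 : (0 < m2)%N by rewrite muln_gt0 hm.
  have hs0 : (0 < sigma G1 G2 j)%N by case/andP: hs.
  rewrite /X /m1 /m2 in hm1 hm2 *.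
  set s := sigma G1 G2 j in hs0 *.
  set n2d := nddot G2 G1 s. set n1d := nddot G1 G2 s.
  case: (leqP (m * G2 * (1 + n2d)) (m * G1 * (1 + n1d))) => hAB.
  +
    have hn2dG : (n2d < G1)%N by apply: nddot_lt.
    case: (ltngtP n2d.+1 G1) => hc.
    * exact: (case1 m G1 G2 j hm h1 h12 hs hc).
    * by move: hc; rewrite ltnNge hn2dG.
    * apply: zero_choice => //.
      - by rewrite add1n hc mulnAC modnMr.
      - by rewrite modnMr.
      - by rewrite add1n hc mulnAC mulKn // -lt0n.
  +
    have hn1dG : (n1d < G2)%N by apply: nddot_lt.
    case: (ltngtP n1d.+1 G2) => hc.
    * exact: (case2 m G1 G2 j hm h1 h12 hs hc).
    * by move: hc; rewrite ltnNge hn1dG.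
    * apply: zero_choice => //.
      - by rewrite modnMr.
      - by rewrite add1n hc mulnAC modnMr.
      - by rewrite add1n hc mulKn // -lt0n.
Qed.
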